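(* Suppose $\kappa<\lambda$ are infinite regular cardinals and $d:[\lambda]^2\to\kappa$ is subadditive and unbounded. Then there is a strong $\lambda$-system $S=\langle\lambda\times 1,\mathcal{R}\rangle$ such that $|\mathcal{R}|=\kappa$ and $S$ has no cofinal branch.
   Context: $d:[\lambda]^2\to\kappa$ (written $d(\alpha,\beta)$ for $\alpha<\beta$) is subadditive if for all $\alpha<\beta<\gamma<\lambda$: $d(\alpha,\gamma)\le\max\{d(\alpha,\beta),d(\beta,\gamma)\}$ and $d(\alpha,\beta)\le\max\{d(\alpha,\gamma),d(\beta,\gamma)\}$; it is unbounded if for every unbounded $I\subseteq\lambda$, $d``[I]^2$ is unbounded in $\kappa$. A relation $R$ is tree-like if $a<_R c$ and $b<_R c$ imply $a,b$ are $R$-comparable ($a=b$, $a<_Rb$ or $b<_Ra$). A $\lambda$-system $\langle I\times\nu,\mathcal{R}\rangle$ consists of an unbounded $I\subseteq\lambda$, $0<\nu<\lambda$, levels $S_\alpha=\{\alpha\}\times\nu$ (with $S$ their union), and a set $\mathcal{R}$ of binary transitive tree-like relations on $S$ with $|\mathcal{R}|<\lambda$, such that $(\alpha_0,\beta_0)<_R(\alpha_1,\beta_1)$ implies $\alpha_0<\alpha_1$, and for all $\alpha_0<\alpha_1$ in $I$ some elements of the two levels are related by some $R\in\mathcal{R}$. It is strong if for all $\alpha_0<\alpha_1$ in $I$ and every $\beta_1<\nu$ there are $\beta_0<\nu$, $R\in\mathcal{R}$ with $(\alpha_0,\beta_0)<_R(\alpha_1,\beta_1)$. A branch through $R$ is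 a set of pairwise $R$-comparable elements; it is cofinal if it meets unboundedly many levels. *)

(* Defs.v *)
(* Infinite cardinals are modelled as well-ordered types
   that are initial ordinals (von Neumann cardinals); the order is the ordinal order. *)
Set Implicit Arguments.

Definition inj_le (A B : Type) : Prop := exists f : A -> B, forall x y, f x = f y -> x = y.
Definition card_eq (A B : Type) : Prop :=
  exists f : A -> B, (forall x y, f x = f y -> x = y) /\ (forall b, exists a, f a = b).

Definition strict_wellorder (T : Type) (lt : T -> T -> Prop) : Prop :=
  (forall x, ~ lt x x) /\
  (forall x y z, lt x y -> lt y z -> lt x z) /\
  (forall x y, lt x y \/ x = y \/ lt y x) /\
  well_founded lt.

Definition unbounded (T : Type) (lt : T -> T -> Prop) (X : T -> Prop) : Prop :=
  forall x, exists y, X y /\ lt x y.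

Definition infinite_regular_cardinal (T : Type) (lt : T -> T -> Prop) : Prop :=
  strict_wellorder lt /\
  inj_le nat T /\
  (* initial ordinal: every proper initial segment has smaller cardinality *)
  (forall x, ~ inj_le T {y : T | lt y x}) /\
  (* regular: every unbounded subset has full cardinality *)
  (forall X : T -> Prop, unbounded lt X -> inj_le T {x : T | X x}).

Definition leo (T : Type) (lt : T -> T -> Prop) (x y : T) : Prop := lt x y \/ x = y.

(* d(a,c) <= max{x,y} in a linear order, written as (d(a,c) <= x or d(a,c) <= y) *)
Definition le_max (K : Type) (ltK : K -> K -> Prop) (z x y : K) : Prop :=
  leo ltK z x \/ leo ltK z y.

(* d : [L]^2 -> K, written d a b for a < b (values for a >= b are irrelevant) *)
Definition subadditive (L K : Type) (ltL : L -> L -> Prop) (ltK : K -> K -> Prop)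
  (d : L -> L -> K) : Prop :=
  forall a b c, ltL a b -> ltL b c ->
    le_max ltK (d a c) (d a b) (d b c) /\ le_max ltK (d a b) (d a c) (d b c).

Definition unbounded_coloring (L K : Type) (ltL : L -> L -> Prop) (ltK : K -> K -> Prop)
  (d : L -> L -> K) : Prop :=
  forall I : L -> Prop, unbounded ltL I ->
    forall k : K, exists a b, I a /\ I b /\ ltL a b /\ leo ltK k (d a b).

(* lambda-systems.  Nodes are pairs (alpha, beta) : L * L; the level set is
   I x nu where nu : L is viewed as the ordinal {beta | beta < nu}. *)
Definition node_in (L : Type) (ltL : L -> L -> Prop) (I : L -> Prop) (nu : L)
  (p : L * L) : Prop := I (fst p) /\ ltL (snd p) nu.

Definition rel_comparable (X : Type) (R : X -> X -> Prop) (a b : X) : Prop :=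
  a = b \/ R a b \/ R b a.

Definition lambda_system (L : Type) (ltL : L -> L -> Prop) (I : L -> Prop) (nu : L)
  (RR : (L * L -> L * L -> Prop) -> Prop) : Prop :=
  unbounded ltL I /\
  (exists b, ltL b nu) /\                         (* 0 < nu  (nu < lambda since nu : L) *)
  ~ inj_le L {R | RR R} /\
  (forall R, RR R ->
     (forall p q, R p q -> node_in ltL I nu p /\ node_in ltL I nu q) /\
     (forall p q r, R p q -> R q r -> R p r) /\
     (forall a b c, R a c -> R b c -> rel_comparable R a b) /\
     (forall p q, R p q -> ltL (fst p) (fst q))) /\
  (forall a0 a1, I a0 -> I a1 -> ltL a0 a1 ->
     exists b0 b1 R, ltL b0 nu /\ ltL b1 nu /\ RR R /\ R (a0, b0) (a1, b1)).

Definition strong_lambda_system (L : Type) (ltL : L -> L -> Prop) (I : L -> Prop) (nu : L)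
  (RR : (L * L -> L * L -> Prop) -> Prop) : Prop :=
  lambda_system ltL I nu RR /\
  (forall a0 a1 b1, I a0 -> I a1 -> ltL a0 a1 -> ltL b1 nu ->
     exists b0 R, ltL b0 nu /\ RR R /\ R (a0, b0) (a1, b1)).

Definition branch (L : Type) (ltL : L -> L -> Prop) (I : L -> Prop) (nu : L)
  (R : L * L -> L * L -> Prop) (B : L * L -> Prop) : Prop :=
  (forall p, B p -> node_in ltL I nu p) /\
  (forall p q, B p -> B q -> rel_comparable R p q).

Definition cofinal_branch (L : Type) (ltL : L -> L -> Prop) (I : L -> Prop) (nu : L)
  (R : L * L -> L * L -> Prop) (B : L * L -> Prop) : Prop :=
  branch ltL I nu R B /\ unbounded ltL (fun a => exists b, B (a, b)).

Definition has_no_cofinal_branch (L : Type) (ltL : L -> L -> Prop) (I : L -> Prop) (nu : L)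
  (RR : (L * L -> L * L -> Prop) -> Prop) : Prop :=
  forall R, RR R -> forall B, ~ cofinal_branch ltL I nu R B.

Definition is_one (L : Type) (ltL : L -> L -> Prop) (one : L) : Prop :=
  exists z, ltL z one /\ forall b, ltL b one -> b = z.

(* Main.v *)
Require Import Defs.
From Stdlib Require Import Classical ClassicalEpsilon ProofIrrelevance.

Lemma CSB (A B : Type) : inj_le A B -> inj_le B A -> card_eq A B.
Proof.
  intros [f finj] [g ginj].
  set (C := fix C (n : nat) (a : A) : Prop :=
         match n with
         | O => ~ exists b, g b = a
         | S m => exists x, C m x /\ a = g (f x)
         end).
  set (CC := fun a => exists n, C n a).
  assert (Hpre : forall a, ~ CC a -> exists b, g b = a).
  { intros a Ha. apply NNPP; intro H. apply Ha. exists O. exact H. }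
  set (h := fun a => match excluded_middle_informative (CC a) with
                     | left _ => f a
                     | right H => proj1_sig (constructive_indefinite_description _ (Hpre a H))
                     end).
  exists h. split.
  - intros a1 a2. unfold h.
    destruct (excluded_middle_informative (CC a1)) as [H1|H1];
    destruct (excluded_middle_informative (CC a2)) as [H2|H2].
    + apply finj.
    + destruct (constructive_indefinite_description _ (Hpre a2 H2)) as [b2 Hb2]; simpl.
      intro E. exfalso. apply H2. destruct H1 as [n Hn]. exists (S n). simpl.
      exists a1. split; [exact Hn|]. rewrite E. auto.
    + destruct (constructive_indefinite_description _ (Hpre a1 H1)) as [b1 Hb1]; simpl.
      intro E. exfalso. apply H1. destruct H2 as [n Hn]. exists (S n). simpl.
      exists a2. split; [exact Hn|]. rewrite <- E. auto.
    + destruct (constructive_indefinite_description _ (Hpre a1 H1)) as [b1 Hb1]; simpl.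
      destruct (constructive_indefinite_description _ (Hpre a2 H2)) as [b2 Hb2]; simpl.
      intro E. subst. reflexivity.
  - intro b. destruct (classic (CC (g b))) as [Hc|Hc].
    + destruct Hc as [[|n] Hn].
      * exfalso. apply Hn. exists b. reflexivity.
      * simpl in Hn. destruct Hn as [x [Hx E]]. apply ginj in E. subst b.
        exists x. unfold h.
        destruct (excluded_middle_informative (CC x)) as [H|H]; [reflexivity|].
        exfalso. apply H. exists n. exact Hx.
    + exists (g b). unfold h.
      destruct (excluded_middle_informative (CC (g b))) as [H|H]; [contradiction|].
      destruct (constructive_indefinite_description _ (Hpre (g b) H)) as [b' Hb']; simpl.
      apply ginj. exact Hb'.
Qed.

Lemma wf_min (T : Type) (lt : T -> T -> Prop) (P : T -> Prop) (x : T) :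
  well_founded lt -> P x -> exists m, P m /\ forall y, lt y m -> ~ P y.
Proof.
  intros wf Px. apply NNPP; intro H.
  assert (forall y, ~ P y).
  { intro y. induction (wf y) as [y _ IH]. intro Py. apply H. exists y.
    split; [exact Py|]. intros w Hw. apply IH. exact Hw. }
  exact (H0 x Px).
Qed.

Lemma no_max (T : Type) (lt : T -> T -> Prop) :
  infinite_regular_cardinal lt -> forall x, exists y, lt x y.
Proof.
  intros [[irr [trans [tot wf]]] [[g ginj] [init reg]]] x.
  apply NNPP; intro Hmax.
  assert (Hlt : forall y, y <> x -> lt y x).
  { intros y Hy. destruct (tot y x) as [H|[H|H]]; auto. contradiction.
    exfalso. apply Hmax. exists y. exact H. }
  set (s := fun t => match excluded_middle_informative (exists n, t = g n) with
                     | left H => g (S (proj1_sig (constructive_indefinite_description _ H)))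
                     | right _ => t end).
  assert (sinj : forall t1 t2, s t1 = s t2 -> t1 = t2).
  { intros t1 t2. unfold s.
    destruct (excluded_middle_informative (exists n, t1 = g n)) as [H1|H1];
    destruct (excluded_middle_informative (exists n, t2 = g n)) as [H2|H2].
    - destruct (constructive_indefinite_description _ H1) as [n1 E1].
      destruct (constructive_indefinite_description _ H2) as [n2 E2]. simpl.
      intro E. apply ginj in E. injection E; intro; subst; reflexivity.
    - destruct (constructive_indefinite_description _ H1) as [n1 E1]. simpl.
      intro E. exfalso. apply H2. exists (S n1). auto.
    - destruct (constructive_indefinite_description _ H2) as [n2 E2]. simpl.
      intro E. exfalso. apply H1. exists (S n2). auto.
    - auto. }
  assert (smiss : forall t, s t <> g 0).
  { intro t. unfold s.
    destruct (excluded_middle_informative (exists n, t = g n)) as [H1|H1].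
    - destruct (constructive_indefinite_description _ H1) as [n1 E1]. simpl.
      intro E. apply ginj in E. discriminate.
    - intro E. apply H1. exists 0. exact E. }
  set (tau := fun t => match excluded_middle_informative (t = x) with
                       | left _ => g 0
                       | right _ => match excluded_middle_informative (t = g 0) with
                                    | left _ => x | right _ => t end end).
  assert (tinv : forall t, tau (tau t) = t).
  { intro t. unfold tau.
    destruct (excluded_middle_informative (t = x)) as [E1|E1].
    - destruct (excluded_middle_informative (g 0 = x)) as [E2|E2].
      + congruence.
      + destruct (excluded_middle_informative (g 0 = g 0)); congruence.
    - destruct (excluded_middle_informative (t = g 0)) as [E2|E2].
      + destruct (excluded_middle_informative (x = x)); congruence.
      + destruct (excluded_middle_informative (t = x)); try congruence.
        destruct (excluded_middle_informative (t = g 0)); congruence. }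
  assert (P : forall t, lt (tau (s t)) x).
  { intro t. apply Hlt. intro E. apply (smiss t).
    rewrite <- (tinv (s t)). rewrite E. unfold tau.
    destruct (excluded_middle_informative (x = x)); congruence. }
  apply (init x). exists (fun t => exist _ (tau (s t)) (P t)).
  intros t1 t2 E. injection E. intro E'.
  apply sinj. rewrite <- (tinv (s t1)), <- (tinv (s t2)). rewrite E'. reflexivity.
Qed.

Lemma leo_trans (T : Type) (lt : T -> T -> Prop) :
  (forall x y z, lt x y -> lt y z -> lt x z) ->
  forall x y z, leo lt x y -> leo lt y z -> leo lt x z.
Proof.
  intros tr x y z [H1|H1] [H2|H2]; subst; unfold leo; eauto.
Qed.

Lemma le_max_bound (T : Type) (lt : T -> T -> Prop) :
  (forall x y z, lt x y -> lt y z -> lt x z) ->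
  forall z x y i, le_max lt z x y -> leo lt x i -> leo lt y i -> leo lt z i.
Proof.
  intros tr z x y i [H|H] Hx Hy; eapply leo_trans; eauto.
Qed.

Theorem mainTheorem8 (K L : Type) (ltK : K -> K -> Prop) (ltL : L -> L -> Prop)
  (hK : infinite_regular_cardinal ltK) (hL : infinite_regular_cardinal ltL)
  (hKL : inj_le K L /\ ~ inj_le L K)
  (d : L -> L -> K)
  (hsub : subadditive ltL ltK d) (hunb : unbounded_coloring ltL ltK d) :
  exists (one : L) (RR : (L * L -> L * L -> Prop) -> Prop),
    is_one ltL one /\
    strong_lambda_system ltL (fun _ => True) one RR /\
    card_eq K {R | RR R} /\
    has_no_cofinal_branch ltL (fun _ => True) one RR.
Proof.
  pose proof (@no_max _ _ hK) as nmK. pose proof (@no_max _ _ hL) as nmL.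
  destruct hK as [[irrK [trK [totK wfK]]] [_ [_ regK]]].
  destruct hL as [[irrL [trL [totL wfL]]] [[gL _] _]].
  destruct hKL as [_ nLK].
  destruct (@wf_min L ltL (fun _ => True) (gL 0) wfL I) as [z [_ zmin]].
  destruct (nmL z) as [w zw].
  destruct (@wf_min L ltL (fun y => ltL z y) w wfL zw) as [one [zone onemin]].
  assert (below : forall b, ltL b one -> b = z).
  { intros b Hb. destruct (totL b z) as [H|[H|H]]; auto.
    - exfalso. exact (zmin b H I).
    - exfalso. exact (onemin b Hb H). }
  set (Rel := fun (i : K) (p q : L * L) =>
         snd p = z /\ snd q = z /\ ltL (fst p) (fst q) /\ leo ltK (d (fst p) (fst q)) i).
  set (inrange := fun i => exists a b, ltL a b /\ d a b = i).
  set (RR := fun R => exists i, inrange i /\ R = Rel i).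
  assert (Relinj : forall i j, inrange i -> inrange j -> Rel i = Rel j -> i = j).
  { assert (half : forall i j, inrange j -> Rel i = Rel j -> ~ ltK i j).
    { intros i j [a [b [ab E]]] HR ij.
      assert (H : Rel j (a, z) (b, z)).
      { unfold Rel; simpl. rewrite E. repeat split; auto. right; reflexivity. }
      rewrite <- HR in H. destruct H as [_ [_ [_ H]]]. simpl in H. rewrite E in H.
      destruct H as [H|H].
      - exact (irrK i (trK _ _ _ ij H)).
      - subst. exact (irrK _ ij). }
    intros i j Hi Hj E. destruct (totK i j) as [H|[H|H]]; auto.
    - exfalso. exact (half i j Hj E H).
    - exfalso. exact (half j i Hi (eq_sym E) H). }
  assert (Hcard : card_eq K {R | RR R}).
  { apply CSB.
    - assert (unbr : unbounded ltK inrange).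
      { intro k. destruct (nmK k) as [k' kk'].
        destruct (hunb (fun _ => True) (fun x => let (y, Hy) := nmL x in ex_intro _ y (conj I Hy)) k') as [a [b [_ [_ [ab H]]]]].
        exists (d a b). split. exists a, b. auto.
        destruct H as [H|H]. eauto. subst; auto. }
      destruct (regK inrange unbr) as [e einj].
      assert (P : forall k, RR (Rel (proj1_sig (e k)))).
      { intro k. exists (proj1_sig (e k)). split; [exact (proj2_sig (e k))|reflexivity]. }
      exists (fun k => exist _ _ (P k)).
      intros k1 k2 E. injection E. intro E'. apply einj.
      apply Relinj in E'; [|exact (proj2_sig (e k1))|exact (proj2_sig (e k2))].
      clear E. destruct (e k1), (e k2). simpl in E'. subst. f_equal. apply proof_irrelevance.
    - exists (fun r : {R | RR R} => proj1_sig (constructive_indefinite_description (fun i => inrange i /\ proj1_sig r = Rel i) (proj2_sig r))).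
      intros [r1 H1] [r2 H2]. simpl.
      destruct (constructive_indefinite_description _ H1) as [i1 [Hi1 E1]].
      destruct (constructive_indefinite_description _ H2) as [i2 [Hi2 E2]]. simpl.
      intro E. subst i2. assert (r1 = r2) by congruence. subst r2. subst r1.
      rewrite (proof_irrelevance _ H1 H2). reflexivity. }
  exists one, RR. split; [|split; [|split; [exact Hcard|]]].
  - exists z. auto.
  - split.
    + split; [intro x; destruct (nmL x) as [y Hy]; exists y; auto|].
      split; [exists z; exact zone|].
      split.
      { intros [f finj]. apply nLK.
        destruct Hcard as [c [cinj csurj]].
        exists (fun l => proj1_sig (constructive_indefinite_description _ (csurj (f l)))).
        intros x y. 
        destruct (constructive_indefinite_description _ (csurj (f x))) as [kx Ex].
        destruct (constructive_indefinite_description _ (csurj (f y))) as [ky Ey]. simpl.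
        intro E. subst. apply finj. rewrite <- Ex, <- Ey. reflexivity. }
      split.
      { intros R [i [_ ER]]. subst R. split; [|split; [|split]].
        - intros p q [Hp [Hq _]]. unfold node_in. rewrite Hp, Hq. auto.
        - intros [p1 p2] [q1 q2] [r1 r2] [Hp [Hq [pq Hpq]]] [_ [Hr [qr Hqr]]].
          simpl in *. unfold Rel; simpl. repeat split; auto. eauto.
          destruct (hsub _ _ _ pq qr) as [H _].
          eapply le_max_bound; eauto.
        - intros [a1 a2] [b1 b2] [c1 c2] [Ha [Hc [ac Hac]]] [Hb [_ [bc Hbc]]].
          simpl in *. subst. unfold rel_comparable.
          destruct (totL a1 b1) as [H|[H|H]].
          + right; left. unfold Rel; simpl. repeat split; auto.
            destruct (hsub _ _ _ H bc) as [_ H2]. eapply le_max_bound; eauto.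
          + subst; auto.
          + right; right. unfold Rel; simpl. repeat split; auto.
            destruct (hsub _ _ _ H ac) as [_ H2]. eapply le_max_bound; eauto.
        - intros p q [_ [_ [H _]]]. exact H. }
      intros a0 a1 _ _ a01. exists z, z, (Rel (d a0 a1)).
      split; [exact zone|]. split; [exact zone|]. split.
      * exists (d a0 a1). split; [exists a0, a1; auto|reflexivity].
      * unfold Rel; simpl. repeat split; auto. right; reflexivity.
    + intros a0 a1 b1 _ _ a01 Hb1. apply below in Hb1. subst b1.
      exists z, (Rel (d a0 a1)). split; [exact zone|]. split.
      * exists (d a0 a1). split; [exists a0, a1; auto|reflexivity].
      * unfold Rel; simpl. repeat split; auto. right; reflexivity.
  - intros R [i [_ ER]] B [[_ Bcomp] Bunb]. subst R.
    destruct (nmK i) as [k ik].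
    destruct (hunb _ Bunb k) as [a [b [[x Bx] [[y By] [ab Hk]]]]].
    destruct (Bcomp _ _ Bx By) as [E|[H|H]].
    + injection E; intros; subst. exact (irrL _ ab).
    + destruct H as [_ [_ [_ H]]]. simpl in H.
      assert (H' : leo ltK k i) by (eapply leo_trans; eauto).
      destruct H' as [H'|H']. exact (irrK _ (trK _ _ _ ik H')). subst; exact (irrK _ ik).
    + destruct H as [_ [_ [H _]]]. simpl in H. exact (irrL _ (trL _ _ _ ab H)).
Qed.
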